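(* Let $P\ll Q$ be probability measures, let $\gamma>1$, and let $f:(0,\infty)\to\mathbb R$ be convex with $f(1)=0$, differentiable at $1$ and at $\gamma$, with $f'(\gamma)>f'(1)$. Then $$E_\gamma(P\Vert Q)\le \frac{D_f(P\Vert Q)}{f'(\gamma)-f'(1)}.$$ If in addition $f$ is differentiable on $[\gamma,\infty)$ with $f'$ being $L$-Lipschitz on $[\gamma,\infty)$ for some $L>0$, and $\gamma_0:=\gamma+\sqrt{2\big(f(\gamma)-f'(1)(\gamma-1)\big)/L}$, then $$E_\gamma(P\Vert Q)\le \frac{D_f(P\Vert Q)}{f'(\gamma_0)-f'(1)}.$$
   Context: For convex $f$ on $(0,\infty)$ extended by $f(0):=\lim_{t\downarrow0}f(t)$ and $P\ll Q$, $D_f(P\Vert Q):=\int f(\mathrm dP/\mathrm dQ)\,\mathrm dQ$. The $E_\gamma$-divergence is $E_\gamma(P\Vert Q):=\int[\mathrm dP/\mathrm dQ-\gamma]_+\,\mathrm dQ$ with $[x]_+=\max\{x,0\}$. *)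

(* Defs.v *)
From HB Require Import structures.
From mathcomp Require Import all_boot all_order all_algebra.
From mathcomp Require Import all_classical all_reals all_analysis.
Set Implicit Arguments. Unset Strict Implicit. Unset Printing Implicit Defensive.
Import Order.TTheory GRing.Theory Num.Theory.
Import numFieldNormedType.Exports.
Local Open Scope classical_set_scope.
Local Open Scope ring_scope.
Local Open Scope charge_scope.

Section fdiv.
Context {d : measure_display} {T : measurableType d} {R : realType}.

(* Density dP/dQ (Radon-Nikodym derivative from the library), as a real
   function; it is finite everywhere when P << Q. *)
Definition dens (P Q : probability T R) : T -> R :=
  fun x => fine (('d (charge_of_finite_measure P) '/d Q) x).

(* f extended to [0,oo) by f(0) := lim_{t -> 0+} f t (possibly +oo);
   values at negative reals are irrelevant (a Q-null set). *)
Definition fext (f : R -> R) (r : R) : \bar R :=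
  if r <= 0 then lim ((fun t => (f t)%:E) @ 0^'+) else (f r)%:E.

Definition fdiv (f : R -> R) (P Q : probability T R) : \bar R :=
  (\int[Q]_x fext f (dens P Q x))%E.

Definition Egamma (gamma : R) (P Q : probability T R) : \bar R :=
  (\int[Q]_x (Num.max (dens P Q x - gamma) 0)%:E)%E.

End fdiv.

Definition convex_pos {R : realType} (f : R -> R) : Prop :=
  forall x y t : R, 0 < x -> 0 < y -> 0 <= t <= 1 ->
    f (t * x + (1 - t) * y) <= t * f x + (1 - t) * f y.

(* Main.v *)
Require Import Defs.
From HB Require Import structures.
From mathcomp Require Import all_boot all_order all_algebra.
From mathcomp Require Import all_classical all_reals all_analysis.
From mathcomp Require Import ring lra measurable_realfun.
Import Order.TTheory GRing.Theory Num.Theory.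
Import numFieldNormedType.Exports.
Local Open Scope classical_set_scope.
Local Open Scope ring_scope.

Section real.
Context {R : realType}.
Lemma conv_core (f : R -> R) x y z : convex_pos f -> 0 < x -> x < y -> y < z ->
  (z - x) * f y <= (z - y) * f x + (y - x) * f z.
Proof.
move=> cf x0 xy yz.
have zx : 0 < z - x by lra.
pose t := (z - y) / (z - x).
have t01 : 0 <= t <= 1.
  apply/andP; split; first by rewrite /t divr_ge0 //; lra.
  by rewrite /t ler_pdivrMr //; lra.
have := cf x z t x0 (lt_trans x0 (lt_trans xy yz)) t01.
have -> : t * x + (1 - t) * z = y.
  rewrite /t; field; lra.
move=> H.
have := ler_wpM2l (ltW zx) H.
have -> : (z - x) * (t * f x + (1 - t) * f z) = (z - y) * f x + (y - x) * f z.
  rewrite /t; field; lra.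
by [].
Qed.

Arguments conv_core {f x y z}.

Lemma tangent (f : R -> R) a t : convex_pos f -> 0 < a -> 0 < t ->
  derivable f a 1 -> f a + derive1 f a * (t - a) <= f t.
Proof.
move=> cf a0 t0 fd.
case: (ltgtP t a) => [ta|aLt|->]; last by rewrite subrr mulr0 addr0.
- have D : (f a - f t) / (a - t) <= derive1 f a.
    rewrite derive1E ['D_1 f a]cvg_at_leftE; last exact: fd.
    apply: limr_ge.
      rewrite -(cvg_at_leftE (fun h => h^-1 *: ((f \o shift a) _ - f a))) //.
      apply: cvg_trans fd; apply: cvg_app.
      move=> A [e egt0 Ae]; exists e => // x xe xgt0; apply: Ae => //.
      exact/ltr0_neq0.
    near=> h.
    have h0 : h < 0 by near: h; exact: nbhs_left_lt.
    have h1 : t - a < h by near: h; apply: nbhs_left_gt; lra.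
    rewrite /= [_%:A]mulr1.
    have := conv_core cf t0 (_ : t < h + a) (_ : h + a < a).
    move=> /(_ ltac:(lra) ltac:(lra)) H.
    set q := h^-1 *: _; set p := _ / _.
    have hq : q * h = f (h + a) - f a by rewrite /q /= mulrC mulrA mulrV ?mul1r //; rewrite unitfE; lra.
    have hp : p * (a - t) = f a - f t by rewrite /p mulrVK //; rewrite unitfE; lra.
    have E : (q - p) * (h * (a - t)) = (f (h + a) - f a) * (a - t) - (f a - f t) * h.
      by rewrite -hq -hp; ring.
    have w0 : h * (a - t) < 0 by rewrite pmulr_llt0 ?subr_gt0 //.
    move: E w0; set w := h * (a - t) => E w0.
    nra.
  have hp : (f a - f t) / (a - t) * (a - t) = f a - f t by rewrite mulrVK //; rewrite unitfE; lra.
  move: D hp; set p := _ / _ => D hp; nra.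
- have D : derive1 f a <= (f t - f a) / (t - a).
    rewrite derive1E ['D_1 f a]cvg_at_rightE; last exact: fd.
    apply: limr_le.
      rewrite -(cvg_at_rightE (fun h => h^-1 *: ((f \o shift a) _ - f a))) //.
      apply: cvg_trans fd; apply: cvg_app.
      move=> A [e egt0 Ae]; exists e => // x xe xgt0; apply: Ae => //.
      exact/lt0r_neq0.
    near=> h.
    have h0 : 0 < h by near: h; exact: nbhs_right_gt.
    have h1 : h < t - a by near: h; apply: nbhs_right_lt; lra.
    rewrite /= [_%:A]mulr1.
    have := conv_core cf a0 (_ : a < h + a) (_ : h + a < t).
    move=> /(_ ltac:(lra) ltac:(lra)) H.
    set q := h^-1 *: _; set p := _ / _.
    have hq : q * h = f (h + a) - f a by rewrite /q /= mulrC mulrA mulrV ?mul1r //; rewrite unitfE; lra.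
    have hp : p * (t - a) = f t - f a by rewrite /p mulrVK //; rewrite unitfE; lra.
    have E : (q - p) * (h * (t - a)) = (f (h + a) - f a) * (t - a) - (f t - f a) * h.
      by rewrite -hq -hp; ring.
    have w0 : 0 < h * (t - a) by rewrite mulr_gt0 ?subr_gt0.
    move: E w0; set w := h * (t - a) => E w0.
    nra.
  have hp : (f t - f a) / (t - a) * (t - a) = f t - f a by rewrite mulrVK //; rewrite unitfE; lra.
  move: D hp; set p := _ / _ => D hp; nra.
Unshelve. all: by end_near. Qed.
Arguments tangent {f a t}.

Lemma pder (d L x s : R) :
  is_derive s 1 ((d \*: id) + ((L/2) \*: ((id - cst x) ^+ 2))) (d + L * (s - x)).
Proof.
apply: is_derive_eq.
rewrite /= expr1 subr0 /= [d%:A]mulr1 [(2 * _)%:A]mulr1 !fctE /=.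
rewrite -[(L/2) *: _]/((L/2) * _).
by field.
Qed.
Lemma pval (d L x s : R) :
  ((d \*: id) + ((L/2) \*: ((id - cst x) ^+ 2))) s = d * s + L/2 * (s - x)^+2.
Proof. by rewrite /= !fctE. Qed.

Lemma lip_quad (f : R -> R) g L x y :
  (forall s, g <= s -> derivable f s 1) ->
  (forall s u, g <= s -> g <= u -> `|derive1 f s - derive1 f u| <= L * `|s - u|) ->
  g <= y -> y <= x ->
  f y <= f x - derive1 f x * (x - y) + L / 2 * (x - y) ^+ 2.
Proof.
move=> fd lip gy yx.
case: (eqVneq y x) => [->|yx']; first by rewrite subrr mulr0 expr0n /= mulr0 subr0 addr0.
have ltyx : y < x by rewrite lt_neqAle yx' yx.
set d := derive1 f x.
pose p := (d \*: id) + ((L/2) \*: ((@id R - cst x) ^+ 2)).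
pose k := f - p.
have dk : forall s, s \in `]y, x[ -> is_derive s 1 k (derive1 f s - (d + L * (s - x))).
  move=> s; rewrite in_itv /= => /andP[ys sx].
  apply: is_deriveB; last exact: pder.
  rewrite derive1E; apply: derivableP; apply: fd; lra.
have ck : {within `[y, x], continuous k}.
  apply: derivable_within_continuous => s; rewrite in_itv /= => /andP[ys sx].
  have H : is_derive s 1 k (derive1 f s - (d + L * (s - x))).
    apply: is_deriveB; last exact: pder.
    rewrite derive1E; apply: derivableP; apply: fd; lra.
  exact: ex_derive.
have [c cI kE] := MVT ltyx dk ck.
have D0 : 0 <= derive1 f c - (d + L * (c - x)).
  move: cI; rewrite in_itv /= => /andP[yc cx].
  have := lip c x ltac:(lra) ltac:(lra).
  rewrite (ler0_norm (_ : c - x <= 0)); last lra.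
  move/ler_normlP => [H1 H2]; rewrite /d; nra.
have : k y <= k x.
  rewrite -subr_ge0 kE; apply: mulr_ge0 => //; lra.
rewrite /k /p /= !fctE /=.
change (f y - (d * y + (L / 2) * (y - x) ^+ 2) <= f x - (d * x + (L / 2) * (x - x) ^+ 2) -> f y <= f x - d * (x - y) + L / 2 * (x - y) ^+ 2).
rewrite subrr expr0n /= mulr0 addr0 !expr2.
move=> H; nra.
Qed.
Arguments lip_quad {f g L x y}.

Lemma mono_itv_measurable (D : set R) (f : R -> R) : is_interval D ->
  {in D &, {homo f : x y / x <= y}} -> measurable_fun D f.
Proof.
move=> iD f_nd.
have mD : measurable D by exact: is_interval_measurable.
apply: (measurability (@RGenCInfty.G R)) => [|/= _ [_] [r] -> <-].
  exact: RGenCInfty.measurableE.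
apply: is_interval_measurable => s t /= [Ds fs] [Dt ft] u /andP[su ut].
have Du : D u by apply: (iD s t) => //; rewrite su.
split => //.
move: fs; rewrite /= !in_itv /= !andbT => fs.
by rewrite (le_trans fs)// f_nd ?inE.
Qed.

Lemma anti_itv_measurable (D : set R) (f : R -> R) : is_interval D ->
  {in D &, {homo f : x y /~ x <= y}} -> measurable_fun D f.
Proof.
move=> iD f_ni; rewrite -(opprK f); apply/measurable_funN.
by apply: mono_itv_measurable => // s t Ds Dt st; rewrite /= lerN2 f_ni.
Qed.
Lemma deriv_mono (f : R -> R) a b : convex_pos f -> 0 < a -> a <= b ->
  derivable f a 1 -> derivable f b 1 -> derive1 f a <= derive1 f b.
Proof.
move=> cf a0 ab fa fb.
have b0 : 0 < b by exact: lt_le_trans ab.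
have h1 := tangent cf a0 b0 fa.
have h2 := tangent cf b0 a0 fb.
case: (eqVneq a b) => [->//|nab].
have lab : a < b by rewrite lt_neqAle nab ab.
have : 0 <= (derive1 f b - derive1 f a) * (b - a) by nra.
rewrite pmulr_lge0 ?subr_ge0 //; lra.
Qed.

Lemma pt1 (f : R -> R) gam t : convex_pos f -> f 1 = 0 -> 1 < gam ->
  derivable f 1 1 -> derivable f gam 1 -> 0 < t ->
  (derive1 f gam - derive1 f 1) * Num.max (t - gam) 0 <= f t - derive1 f 1 * (t - 1).
Proof.
move=> cf f1 g1 fd1 fdg t0.
have gam0 : 0 < gam by lra.
have h1 := tangent cf ltr01 t0 fd1.
have h2 := tangent cf gam0 t0 fdg.
have h3 := tangent cf ltr01 gam0 fd1.
rewrite f1 add0r in h1 h3.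
case: (leP (t - gam) 0) => tg.
  by rewrite mulr0 subr_ge0.
nra.
Qed.

Lemma pt2 (f : R -> R) gam L t : convex_pos f -> f 1 = 0 -> 1 < gam ->
  derivable f 1 1 -> 0 < L ->
  (forall x, gam <= x -> derivable f x 1) ->
  (forall x y, gam <= x -> gam <= y ->
        `|derive1 f x - derive1 f y| <= L * `|x - y|) -> 0 < t ->
  let gamma0 := gam + Num.sqrt (2 * (f gam - derive1 f 1 * (gam - 1)) / L) in
  (derive1 f gamma0 - derive1 f 1) * Num.max (t - gam) 0 <= f t - derive1 f 1 * (t - 1).
Proof.
move=> cf f1 g1 fd1 L0 fdg lip t0; rewrite [in X in is_true X]/=.
have gam0 : 0 < gam by lra.
set c1 := derive1 f 1.
set G := f gam - c1 * (gam - 1).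
have G0 : 0 <= G.
  have := tangent cf ltr01 gam0 fd1; rewrite f1 add0r /G /c1; lra.
set del := Num.sqrt _.
set gamma0 := gam + del.
have del0 : 0 <= del by exact: sqrtr_ge0.
have hdel : L * del ^+ 2 = 2 * G.
  rewrite /del sqr_sqrtr; last by apply: divr_ge0; [nra|exact: ltW].
  rewrite mulrC mulrVK //; rewrite unitfE; lra.
have T4 : L / 2 * del ^+ 2 = G.
  by rewrite mulrAC hdel; field.
have g0g : gam <= gamma0 by rewrite /gamma0; lra.
have fdg0 := fdg _ g0g.
set d0 := derive1 f gamma0.
have h1 := tangent cf ltr01 t0 fd1.
rewrite f1 add0r -/c1 in h1.
case: (leP (t - gam) 0) => tg.
  by rewrite mulr0 subr_ge0.
case: (leP t gamma0) => tg0.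
- have Q := lip_quad fdg lip (lexx gam) (_ : gam <= t); move/(_ ltac:(lra)): Q => Q.
  have L1 := lip t gamma0 ltac:(lra) g0g.
  rewrite (ler0_norm (_ : t - gamma0 <= 0)) in L1; last lra.
  move/ler_normlP: L1 => [L1 L2].
  set ft := derive1 f t in Q L1 L2.
  have e1 : 0 <= (ft - d0 + L * (del - (t - gam))) * (t - gam).
    apply: mulr_ge0; last lra.
    rewrite -/d0 in L1 L2; rewrite /gamma0 in L1 L2; nra.
  have e2 : 0 <= L * (del - (t - gam)) ^+ 2 by apply: mulr_ge0; [exact: ltW|exact: sqr_ge0].
  have T3 : 0 <= L / 2 * (del - (t - gam)) ^+ 2.
    by apply: mulr_ge0; [apply: divr_ge0; [exact: ltW|lra]|exact: sqr_ge0].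
  have key : f t - c1 * (t - 1) - (d0 - c1) * (t - gam) =
     (f t - ft * (t - gam) + L / 2 * (t - gam) ^+ 2 - f gam) +
     (ft - d0 + L * (del - (t - gam))) * (t - gam) +
     L / 2 * (del - (t - gam)) ^+ 2 + (G - L / 2 * del ^+ 2).
    by rewrite /G; field.
  rewrite -subr_ge0 key T4 subrr addr0.
  apply: addr_ge0; last exact: T3.
  apply: addr_ge0; last exact: e1.
  by rewrite subr_ge0.
- have gamma00 : 0 < gamma0 by lra.
  have h2 := tangent cf gamma00 t0 fdg0.
  have Q := lip_quad fdg lip (lexx gam) g0g.
  have eg : gamma0 - gam = del by rewrite /gamma0; lra.
  rewrite eg in Q.
  rewrite -/d0 in h2 Q.
  have key : f t - c1 * (t - 1) - (d0 - c1) * (t - gam) =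
     (f t - (f gamma0 + d0 * (t - gamma0))) +
     (f gamma0 - d0 * del + L / 2 * del ^+ 2 - f gam) + (G - L / 2 * del ^+ 2).
    by rewrite /gamma0 /G; field.
  rewrite -subr_ge0 key T4 subrr addr0.
  by apply: addr_ge0; rewrite subr_ge0 // -T4.
Qed.

Section gfun.
Variable f : R -> R.
Hypothesis cf : convex_pos f.
Hypothesis f1 : f 1 = 0.
Hypothesis fd1 : derivable f 1 1.
Let c1 := derive1 f 1.
Let g t := f t - c1 * (t - 1).

Lemma g_ge0 t : 0 < t -> 0 <= g t.
Proof.
move=> t0; have := tangent cf ltr01 t0 fd1.
by rewrite f1 add0r /g /c1 subr_ge0.
Qed.

Lemma g_anti x y : 0 < x -> x <= y -> y <= 1 -> g y <= g x.
Proof.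
move=> x0 xy y1.
case: (eqVneq x y) => [->//|xy'].
have ltxy : x < y by rewrite lt_neqAle xy' xy.
case: (eqVneq y 1) => [->|y1'].
  by rewrite /g f1 subrr mulr0 subr0; apply: g_ge0.
have lty1 : y < 1 by rewrite lt_neqAle y1' y1.
have := conv_core cf x0 ltxy lty1.
have gy := @g_ge0 y (lt_trans x0 ltxy).
move: gy; rewrite /g f1 => gy H.
nra.
Qed.

Lemma g_mono x y : 1 <= x -> x <= y -> g x <= g y.
Proof.
move=> x1 xy.
case: (eqVneq x y) => [->//|xy'].
have ltxy : x < y by rewrite lt_neqAle xy' xy.
case: (eqVneq x 1) => [->|x1'].
  rewrite /g f1 subrr mulr0 subr0; apply: g_ge0; lra.
have lt1x : 1 < x by rewrite lt_neqAle eq_sym x1' x1.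
have := conv_core cf ltr01 lt1x ltxy.
have gx := @g_ge0 x (lt_trans ltr01 lt1x).
move: gx; rewrite /g f1 => gx H.
nra.
Qed.

Lemma lin_measurable (D : set R) : measurable_fun D (fun t : R => c1 * (t - 1)).
Proof.
apply: measurable_funM => //; apply: measurable_funB => //.
Qed.

Lemma fext_measurable : measurable_fun setT (fext f).
Proof.
have -> : [set: R] = `]-oo, 0] `|` (`]0, 1] `|` `]1, +oo[).
  apply/seteqP; split => x // _.
  rewrite /= !in_itv /= andbT.
  case: (leP x 0) => x0; [by left|right].
  by case: (leP x 1) => x1; [left | right].
have mI (i : interval R) : measurable [set` i].
  by apply: is_interval_measurable; exact: interval_is_interval.
apply/(@measurable_funU _ _ _ _ _ _ (fext f) (mI _) (measurableU _ _ (mI _) (mI _))); split.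
  apply: (eq_measurable_fun (cst (lim ((fun t => (f t)%:E) @ 0^'+)))).
    by move=> x; rewrite inE /= in_itv /= => x0; rewrite /fext x0.
  exact: measurable_cst.
apply/(@measurable_funU _ _ _ _ _ _ (fext f) (mI _) (mI _)); split.
  apply: (eq_measurable_fun (EFin \o (fun t => g t + c1 * (t - 1)))).
    move=> x; rewrite inE /= in_itv /= => /andP[x0 _].
    by rewrite /fext (lt_geF x0) /g subrK.
  apply/measurable_EFinP; apply: measurable_funD; last exact: lin_measurable.
  apply: anti_itv_measurable; first exact: interval_is_interval.
  move=> x y; rewrite !inE /= !in_itv /= => /andP[x0 x1] /andP[y0 y1] xy.
  exact: g_anti.
apply: (eq_measurable_fun (EFin \o (fun t => g t + c1 * (t - 1)))).
  move=> x; rewrite inE /= in_itv /= andbT => x1.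
  by rewrite /fext (lt_geF (lt_trans ltr01 x1)) /g subrK.
apply/measurable_EFinP; apply: measurable_funD; last exact: lin_measurable.
apply: mono_itv_measurable; first exact: interval_is_interval.
move=> x y; rewrite !inE /= !in_itv /= !andbT => x1 y1 xy.
apply: g_mono => //; exact: ltW.
Qed.

Lemma fext0_ge : ((- c1)%:E <= fext f 0)%E.
Proof.
rewrite /fext lexx.
have cG : cvg ((g t)%:E @[t --> 0^'+]).
  apply: nonincreasing_at_right_is_cvge.
  near=> x => a b; rewrite !in_itv /= => /andP[a0 ax] /andP[b0 bx] ab.
  have x1 : x < 1 by near: x; apply: nbhs_right_lt; exact: ltr01.
  rewrite lee_fin; apply: g_anti => //; apply: ltW; exact: lt_trans bx x1.
have cL : (c1 * (t - 1))%:E @[t --> 0^'+] --> (c1 * (0 - 1))%:E.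
  apply: cvg_EFin; first by near=> t.
  apply: cvg_at_right_filter; apply: cvgM; first exact: cvg_cst.
  by apply: cvgB; [exact: cvg_id|exact: cvg_cst].
have -> : (fun t => (f t)%:E) = (fun t => (g t)%:E + (c1 * (t - 1))%:E)%E.
  by apply/funext => t; rewrite -EFinD /g subrK.
rewrite limeD //; last first.
  by rewrite (cvg_lim _ cL) //; apply: fin_num_adde_defl.
  by apply/cvg_ex; eexists; exact: cL.
rewrite (cvg_lim _ cL) //.
rewrite sub0r mulrN1 -[X in (X <= _)%E]add0e.
apply: leeD2r.
apply: lime_ge => //.
near=> t; rewrite lee_fin; apply: g_ge0.
by near: t; exact: nbhs_right_gt.
Unshelve. all: by end_near. Qed.

End gfun.

Section integ.
Context {d : measure_display} {T : measurableType d}.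
Variable mu : {measure set T -> \bar R}.
Local Open Scope ereal_scope.

Lemma ge0_int_integralD (K : T -> \bar R) (G : T -> R) :
  measurable_fun setT K -> (forall x, 0 <= K x) ->
  mu.-integrable setT (EFin \o G) ->
  \int[mu]_x (K x + (G x)%:E) = \int[mu]_x K x + \int[mu]_x (G x)%:E.
Proof.
move=> mK K0 iG.
have [iK|niK] := pselect (mu.-integrable setT K).
  by rewrite integralD.
have Koo : \int[mu]_x K x = +oo.
  apply/eqP; rewrite eq_le leey /= leNgt; apply/negP => Kfin; apply: niK.
  apply/integrableP; split => //.
  by under eq_integral => x _ do rewrite gee0_abs//.
have Gfin := integrable_fin_num measurableT iG.
rewrite Koo addye; last by move: Gfin; case: (\int[mu]_x (G x)%:E).
have mG : measurable_fun setT (EFin \o G) by exact: measurable_int iG.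
set S := fun x => K x + (G x)%:E.
have mS : measurable_fun setT S by exact: emeasurable_funD.
have iGn : \int[mu]_x (EFin \o G)^\- x < +oo := integral_funeneg_lt_pinfty measurableT iG.
have h1 : \int[mu]_x S^\+ x = +oo.
  have H : \int[mu]_x K x <= \int[mu]_x (S^\+ x + (EFin \o G)^\- x).
    apply: ge0_le_integral => //.
    - by apply: emeasurable_funD; [exact: measurable_funepos|exact: measurable_funeneg].
    - move=> x _; rewrite funeposE funenegE /S.
      apply: (@le_trans _ _ (K x + (G x)%:E + (- (G x)%:E))).
        by rewrite addeK.
      by apply: leeD; rewrite le_max lexx.
  move: H; rewrite ge0_integralD //; last 2 first.
    - exact: measurable_funepos.
    - exact: measurable_funeneg.
  rewrite Koo leye_eq => /eqP H; apply/eqP; rewrite eq_le leey /= leNgt; apply/negP => Sfin.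
  by have := lte_add_pinfty Sfin iGn; rewrite H ltxx.
have h2 : \int[mu]_x S^\- x < +oo.
  apply: le_lt_trans iGn; apply: ge0_le_integral => //.
  - exact: measurable_funeneg.
  - exact: measurable_funeneg.
  - move=> x _; rewrite !funenegE /S ge_max; apply/andP; split; last by rewrite le_max lexx orbT.
    rewrite le_max; apply/orP; left; rewrite leeN2.
    by rewrite leeDr.
rewrite integralE h1 addye //.
rewrite eqe_oppLR /=; apply/negbT/lt_eqF; exact: h2.
Qed.

End integ.

Section integ2.
Context {d : measure_display} {T : measurableType d}.
Local Open Scope ereal_scope.

Lemma core (Q : probability T R) (u : T -> R) (f : R -> R) (gam c c1 : R) :
  measurable_fun setT u -> (forall x, (0 <= u x)%R) ->
  Q.-integrable setT (EFin \o u) ->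
  \int[Q]_x (u x)%:E = 1 -> (0 < c)%R -> measurable_fun setT (fext f) ->
  (forall t, (0 <= t)%R ->
     (c * Num.max (t - gam) 0)%:E <= fext f t - (c1 * (t - 1))%:E) ->
  \int[Q]_x (Num.max (u x - gam) 0)%:E * c%:E <= \int[Q]_x fext f (u x).
Proof.
move=> mu0 u0 iu Iu c0 mf H.
set G := fun x => (c1 * (u x - 1))%R.
have i1 : Q.-integrable setT (EFin \o cst (1%R : R)) by exact: finite_measure_integrable_cst.
have iG : Q.-integrable setT (EFin \o G).
  apply: (eq_integrable measurableT (fun x => c1%:E * ((u x)%:E - (cst 1%R x)%:E))).
    by move=> x _; rewrite /G /= EFinM EFinB.
  apply: (integrableZl measurableT); exact: (integrableB measurableT).
have IG : \int[Q]_x (G x)%:E = 0.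
  under eq_integral do rewrite /G EFinM.
  rewrite integralZl //; last first.
    by apply: (eq_integrable measurableT (fun x => (u x)%:E - (cst 1%R x)%:E)) => //; exact: (integrableB measurableT).
  rewrite (eq_integral (fun x => (u x)%:E - (cst 1%R x)%:E)); last by move=> x _; rewrite EFinB.
  rewrite integralB_EFin // Iu.
  rewrite (_ : \int[Q]_x (cst 1%R x)%:E = \int[Q]_x (cst (1 : \bar R) x)) //.
  rewrite integral_cst // (_ : 1 * Q [set: T] = 1); last by rewrite mul1e; exact: probability_setT.
  by rewrite subee // mule0.
have mF : measurable_fun setT (fun x => fext f (u x)) by exact: measurableT_comp.
have mG : measurable_fun setT (EFin \o G) by exact: measurable_int iG.
set K := fun x => fext f (u x) - (G x)%:E.
have mK : measurable_fun setT K by exact: emeasurable_funB.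
have Kge : forall x, (c * Num.max (u x - gam) 0)%:E <= K x by move=> x; exact: H.
have K0 : forall x, 0 <= K x.
  move=> x; apply: le_trans (Kge x); rewrite lee_fin; apply: mulr_ge0; first exact: ltW.
  by rewrite le_max lexx orbT.
rewrite [X in _ <= X](eq_integral (fun x => K x + (G x)%:E)); last by move=> x _; rewrite /K subeK.
rewrite (ge0_int_integralD Q) // IG adde0.
apply: (@le_trans _ _ (\int[Q]_x (c * Num.max (u x - gam) 0)%:E)); first last.
  apply: ge0_le_integral => //.
  - move=> x _; rewrite lee_fin; apply: mulr_ge0; first exact: ltW.
    by rewrite le_max lexx orbT.
  - apply/measurable_EFinP; apply: measurable_funM => //.
    apply: measurable_maxr => //; exact: measurable_funB.
under [X in _ <= X]eq_integral do rewrite EFinM.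
rewrite ge0_integralZl //.
- by rewrite muleC.
- apply/measurable_EFinP; apply: measurable_maxr => //; exact: measurable_funB.
- by move=> x _; rewrite lee_fin le_max lexx orbT.
- by rewrite lee_fin ltW.
Qed.

Lemma main_meas (P Q : probability T R) (f : R -> R) (gam c c1 : R) :
  P `<< Q -> (0 < c)%R -> measurable_fun setT (fext f) ->
  (forall t, (0 <= t)%R ->
     (c * Num.max (t - gam) 0)%:E <= fext f t - (c1 * (t - 1))%:E) ->
  Egamma gam P Q <= fdiv f P Q * (c^-1)%:E.
Proof.
move=> PQ c0 mf H.
rewrite lee_pdivlMr //.
set RN := Radon_Nikodym (charge_of_finite_measure P) Q.
have PQ' : charge_of_finite_measure P `<< Q := PQ.
have finRN x : RN x \is a fin_num := Radon_Nikodym_fin_num x PQ'.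
have iRN : Q.-integrable setT RN := Radon_Nikodym_integrable PQ'.
have mRN : measurable_fun setT RN := measurable_int _ iRN.
have mdens : measurable_fun setT (dens P Q).
  exact: (measurableT_comp (fine_measurable measurableT) mRN).
have dRN x : ((dens P Q x)%:E = RN x) by rewrite /dens fineK.
have ae0 : {ae Q, forall x, [set: T] x -> (0 <= dens P Q x)%R}.
  have := ae_eq_Radon_Nikodym_SigmaFinite PQ measurableT.
  apply: filterS => x /(_ I) eq _; rewrite /dens.
  apply: fine_ge0; have := Radon_Nikodym_SigmaFinite.f_ge0 PQ x; rewrite eq; exact.
set u := fun x => Num.max (dens P Q x) 0%R.
have ud : {ae Q, forall x, [set: T] x -> u x = dens P Q x}.
  by apply: filterS ae0 => x h /h d0; rewrite /u; apply: max_l.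
have mu : measurable_fun setT u by apply: measurable_maxr.
have idens : Q.-integrable setT (EFin \o dens P Q).
  by apply: (eq_integrable measurableT RN) => // x _; rewrite /= dRN.
have iu : Q.-integrable setT (EFin \o u).
  apply: (le_integrable measurableT _ _ idens).
    by apply/measurable_EFinP.
  move=> x _; rewrite /= lee_fin /u.
  by case: (leP (dens P Q x) 0%R) => h; rewrite ?normr0.
have Iu : \int[Q]_x (u x)%:E = 1.
  rewrite (ae_eq_integral (fun x => (dens P Q x)%:E)) //.
  - under eq_integral do rewrite dRN.
    rewrite -(Radon_Nikodym_integral PQ' measurableT).
    exact: probability_setT.
  - by apply/measurable_EFinP.
  - by apply/measurable_EFinP.
  - by apply: filterS ud => x h /h ->.
have -> : Egamma gam P Q = \int[Q]_x (Num.max (u x - gam) 0)%:E.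
  rewrite /Egamma (ae_eq_integral (fun x => (Num.max (u x - gam) 0)%:E)) //.
  - apply/measurable_EFinP; apply: measurable_maxr => //; exact: measurable_funB.
  - apply/measurable_EFinP; apply: measurable_maxr => //; exact: measurable_funB.
  - by apply: filterS ud => x h /h ->.
have -> : fdiv f P Q = \int[Q]_x fext f (u x).
  rewrite /fdiv (ae_eq_integral (fun x => fext f (u x))) //.
  - exact: measurableT_comp.
  - exact: measurableT_comp.
  - by apply: filterS ud => x h /h ->.
apply: (@core Q u f gam c c1 mu) => //.
by move=> x; rewrite /u le_max lexx orbT.
Qed.
End integ2.

Lemma pointwise_ext (f : R -> R) gam c :
  convex_pos f -> f 1 = 0 -> derivable f 1 1 -> 1 < gam ->
  (forall t, 0 < t -> c * Num.max (t - gam) 0 <= f t - derive1 f 1 * (t - 1)) ->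
  forall t, 0 <= t ->
  ((c * Num.max (t - gam) 0)%:E <= fext f t - (derive1 f 1 * (t - 1))%:E)%E.
Proof.
move=> cf f1 fd1 g1 H t; rewrite le_eqVlt => /orP[/eqP <-|t0].
  have -> : Num.max (0 - gam) 0 = 0 by apply: max_r; lra.
  rewrite mulr0 sub0r mulrN1 EFinN.
  have := @fext0_ge f cf f1 fd1.
  case: (fext f 0) => [r| |] // h.
  - rewrite lee_fin in h; rewrite -EFinN -EFinB lee_fin; lra.
  - by rewrite -EFinN addye ?leey.
by rewrite /fext (lt_geF t0) -EFinD lee_fin; apply: H.
Qed.

End real.

Theorem mainTheorem6 (d : measure_display) (T : measurableType d) (R : realType)
  (P Q : probability T R) (gamma : R) (f : R -> R) :
  P `<< Q ->
  1 < gamma ->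
  convex_pos f ->
  f 1 = 0 ->
  derivable f 1 1 ->
  derivable f gamma 1 ->
  derive1 f 1 < derive1 f gamma ->
  (Egamma gamma P Q <= fdiv f P Q * ((derive1 f gamma - derive1 f 1)^-1)%:E)%E /\
  (forall L : R, 0 < L ->
     (forall x, gamma <= x -> derivable f x 1) ->
     (forall x y, gamma <= x -> gamma <= y ->
        `|derive1 f x - derive1 f y| <= L * `|x - y|) ->
     let gamma0 := gamma + Num.sqrt (2 * (f gamma - derive1 f 1 * (gamma - 1)) / L) in
     (Egamma gamma P Q <= fdiv f P Q * ((derive1 f gamma0 - derive1 f 1)^-1)%:E)%E).
Proof.
move=> PQ g1 cf f1 fd1 fdg dlt.
have mf := @fext_measurable R f cf f1 fd1.
split.
  apply: main_meas => //; first by rewrite subr_gt0.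
  apply: pointwise_ext => // t t0; exact: pt1.
move=> L L0 fdx lip.
rewrite [in X in is_true X]/=.
set gamma0 := gamma + _.
have g0g : gamma <= gamma0.
  rewrite /gamma0 lerDl; exact: sqrtr_ge0.
apply: main_meas => //.
  have := @deriv_mono R f gamma gamma0 cf (_ : 0 < gamma) g0g fdg (fdx _ g0g).
  move=> /(_ ltac:(lra)) h; lra.
apply: pointwise_ext => // t t0.
exact: (@pt2 R f gamma L t cf f1 g1 fd1 L0 fdx lip t0).
Qed.
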